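(* Let $n\geq 1$ and $\lambda>0$. The following are equivalent: (1) for every $\lambda$-concave body $K\subset\mathbb{R}^{n+1}$ and every triple $0\leq i<j<k\leq n+1$ one has $(k-j)\lambda^{-i}W_i(K)+(i-k)\lambda^{-j}W_j(K)+(j-i)\lambda^{-k}W_k(K)\geq 0$, with equality if and only if $K$ is a $\lambda$-sausage body; (2) for every $\lambda$-concave body $K\subset\mathbb{R}^{n+1}$ and every integer $l$ with $0\leq l\leq n-1$ one has $\lambda^{-l}W_l(K)-2\lambda^{-(l+1)}W_{l+1}(K)+\lambda^{-(l+2)}W_{l+2}(K)\geq 0$, with equality if and only if $K$ is a $\lambda$-sausage body.
   Context: A convex body is a compact convex set with non-empty interior; balls are closed. For $\lambda>0$, a convex body $K\subset\mathbb{R}^{n+1}$ is $\lambda$-concave if for every $p\in\partial K$ there is a ball of radius $1/\lambda$ whose boundary passes through $p$ and which, intersected with some open neighborhood $U(p)$ of $p$, is contained in $K\cap U(p)$. A $\lambda$-sausage body is the convex hull of two (possibly coinciding) balls of radius $1/\lambda$. The quermassintegrals $W_i(K)$ are defined by the Steiner formula $\mathrm{Vol}_{n+1}(K+tB)=\sum_{i=0}^{n+1}\binom{n+1}{i}W_i(K)t^i$, $t\geq0$, with $B$ the unit ball and $+$ Minkowski addition. *)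

(* Defs.v *)
From HB Require Import structures.
From mathcomp Require Import all_boot all_order all_algebra.
From mathcomp Require Import all_classical all_reals all_analysis.
Set Implicit Arguments. Unset Strict Implicit. Unset Printing Implicit Defensive.
Import Order.TTheory GRing.Theory Num.Theory.
Import numFieldNormedType.Exports.
Local Open Scope classical_set_scope.
Local Open Scope ring_scope.

Section Defs.
Variable R : realType.
Variable m : nat.
(* Points of R^m are row vectors 'rV[R]_m (product topology = Euclidean topology). *)
Notation V := 'rV[R]_m.

Definition enorm (x : V) : R := Num.sqrt (\sum_(i < m) (x ord0 i) ^+ 2).

Definition eball (c : V) (r : R) : set V := [set x | enorm (x - c) <= r].

Definition convex_set (A : set V) : Prop :=
  forall x y, A x -> A y -> forall t : R, 0 <= t <= 1 -> A ((1 - t) *: x + t *: y).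

Definition convex_body (K : set V) : Prop :=
  compact K /\ convex_set K /\ (interior K) !=set0.

Definition boundary (K : set V) : set V := closure K `\` interior K.

Definition conv_hull (A : set V) : set V :=
  \bigcap_(C in [set C : set V | convex_set C /\ A `<=` C]) C.

Definition minkowski_sum (A B : set V) : set V := [set a + b | a in A & b in B].

Definition scale_set (t : R) (A : set V) : set V := [set t *: a | a in A].

Definition lambda_concave (lam : R) (K : set V) : Prop :=
  convex_body K /\
  forall p, boundary K p ->
    exists c : V, enorm (p - c) = lam^-1 /\
      exists U : set V, open U /\ U p /\ eball c lam^-1 `&` U `<=` K `&` U.

Definition lambda_sausage (lam : R) (K : set V) : Prop :=
  exists c1 c2 : V, K = conv_hull (eball c1 lam^-1 `|` eball c2 lam^-1).

Definition box (a b : V) : set V := [set x | forall i, a ord0 i <= x ord0 i <= b ord0 i].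
Definition box_vol (a b : V) : R := \prod_(i < m) (b ord0 i - a ord0 i).

(* (m-dimensional) Lebesgue outer measure: infimum over countable box covers *)
Definition vol (A : set V) : \bar R :=
  ereal_inf [set (\sum_(0 <= k <oo) (box_vol (ab.1 k) (ab.2 k))%:E)%E
            | ab in [set ab : (nat -> V) * (nat -> V) |
                       (forall k i, ab.1 k ord0 i <= ab.2 k ord0 i) /\
                       A `<=` \bigcup_k box (ab.1 k) (ab.2 k)]].
(* Steiner formula: W are the quermassintegrals of K, i.e.
   Vol_m(K + tB) = sum_{i=0}^{m} binom(m,i) W_i t^i for all t >= 0 *)
Definition steiner_coeffs (K : set V) (W : nat -> R) : Prop :=
  forall t : R, 0 <= t ->
    vol (minkowski_sum K (scale_set t (eball 0 1))) =
    (\sum_(i < m.+1) ('C(m, i))%:R * W i * t ^+ i)%:E.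
End Defs.

(* Main.v *)
Require Import Defs.
From HB Require Import structures.
From mathcomp Require Import all_boot all_order all_algebra.
From mathcomp Require Import all_classical all_reals all_analysis.
Import Order.TTheory GRing.Theory Num.Theory.
Import numFieldNormedType.Exports.
Local Open Scope classical_set_scope.
Local Open Scope ring_scope.
From mathcomp Require Import ring lra zify.

Lemma diff_mono (R : realFieldType) (a : nat -> R) (N : nat) :
 (forall l, (l <= N)%N -> 0 <= a l - 2 * a l.+1 + a l.+2) ->
 forall p q, (p <= q)%N -> (q <= N.+1)%N -> a p.+1 - a p <= a q.+1 - a q.
Proof.
move=> H p; elim=> [|q IH] pq qN.
  by have -> : p = 0%N by lia.
case: (ltngtP p q.+1) pq => // [pq _|-> _]; last by [].
have := H q ltac:(lia); have := IH ltac:(lia) ltac:(lia); lra.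
Qed.

Lemma key (R : realFieldType) (a : nat -> R) (N : nat) :
 (forall l, (l <= N)%N -> 0 <= a l - 2 * a l.+1 + a l.+2) ->
 forall p i k, (i <= p)%N -> (p.+1 < k)%N -> (k <= N.+2)%N ->
 (p.+1 - i)%:R * (k - p.+1)%:R * (a p - 2 * a p.+1 + a p.+2) <=
 (k%:R - p.+1%:R) * a i + (i%:R - k%:R) * a p.+1 + (p.+1%:R - i%:R) * a k.
Proof.
move=> H p i k ip pk kN.
set j := p.+1.
have A : forall t, (j + t <= N.+2)%N -> t%:R * (a j.+1 - a j) <= a (j + t)%N - a j.
  elim=> [|t IH] jt; first by rewrite addn0 mul0r subrr.
  have := IH ltac:(lia).
  have := @diff_mono _ a N H j (j + t)%N ltac:(lia) ltac:(lia).
  rewrite addnS -natr1; lra.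
have B : forall s, (s <= j)%N -> a j - a (j - s)%N <= s%:R * (a j - a p).
  elim=> [|s IH] sj; first by rewrite subn0 mul0r subrr.
  have := IH ltac:(lia).
  have := @diff_mono _ a N H (j - s.+1)%N p ltac:(lia) ltac:(lia).
  have -> : (j - s.+1).+1 = (j - s)%N by rewrite /j; lia.
  rewrite -natr1; lra.
have := A (k - j)%N ltac:(lia).
have := B (j - i)%N ltac:(lia).
have -> : (j + (k - j))%N = k by lia.
have -> : (j - (j - i))%N = i by lia.
have ek : k%:R = j%:R + (k - j)%:R :> R by rewrite -natrD; congr (_%:R); lia.
have ei : j%:R = i%:R + (j - i)%:R :> R by rewrite -natrD; congr (_%:R); lia.
rewrite ek ei.
set x := (k - j)%:R; set y := (j - i)%:R.
have x0 : 0 <= x :> R by rewrite ler0n.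
have y0 : 0 <= y :> R by rewrite ler0n.
move=> hB hA.
have hA' := ler_wpM2l y0 hA.
have hB' := ler_wpM2l x0 hB.
rewrite -/j in hA' hB' *.
nra.
Qed.

Theorem lemma3p1 (R : realType) (n : nat) (lam : R) :
  (1 <= n)%N -> 0 < lam ->
  ((forall (K : set 'rV[R]_(n.+1)) (W : nat -> R),
      lambda_concave lam K -> steiner_coeffs K W ->
      forall i j k : nat, (i < j)%N -> (j < k)%N -> (k <= n.+1)%N ->
        let e := (k%:Z - j%:Z)%:~R * lam ^- i * W i
                 + (i%:Z - k%:Z)%:~R * lam ^- j * W j
                 + (j%:Z - i%:Z)%:~R * lam ^- k * W k in
        0 <= e /\ (e = 0 <-> lambda_sausage lam K))
   <->
   (forall (K : set 'rV[R]_(n.+1)) (W : nat -> R),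
      lambda_concave lam K -> steiner_coeffs K W ->
      forall l : nat, (l <= n.-1)%N ->
        let e := lam ^- l * W l - 2 * (lam ^- l.+1 * W l.+1)
                 + lam ^- l.+2 * W l.+2 in
        0 <= e /\ (e = 0 <-> lambda_sausage lam K))).
Proof.
move=> n1 lam0; split=> [H1|H2].
- move=> K W hK hW l hl e.
  have h := H1 K W hK hW l l.+1 l.+2 (ltnSn _) (ltnSn _) ltac:(lia).
  cbv zeta in h.
  suff E : e = (((l.+2)%:Z - (l.+1)%:Z)%:~R * lam ^- l * W l
                 + (l%:Z - (l.+2)%:Z)%:~R * lam ^- l.+1 * W l.+1
                 + ((l.+1)%:Z - l%:Z)%:~R * lam ^- l.+2 * W l.+2 : R).
    by rewrite E.
  rewrite /e !rmorphB /= -!natr1; ring.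
- move=> K W hK hW i j k ij jk kn.
  set a := fun m : nat => lam ^- m * W m.
  have hd : forall l, (l <= n.-1)%N -> 0 <= a l - 2 * a l.+1 + a l.+2.
    by move=> l hl; exact: (H2 K W hK hW l hl).1.
  have hd' : forall l, (l <= n.-1)%N -> (a l - 2 * a l.+1 + a l.+2 = 0 <-> lambda_sausage lam K).
    by move=> l hl; exact: (H2 K W hK hW l hl).2.
  case: j ij jk => [//|p] ij jk e.
  have kN : (k <= n.-1.+2)%N by lia.
  have hk := @key _ a n.-1 hd p i k ltac:(lia) jk kN.
  have E : e = (k%:R - p.+1%:R) * a i + (i%:R - k%:R) * a p.+1 + (p.+1%:R - i%:R) * a k.
    by rewrite /e /a !rmorphB /= -!mulrA.
  rewrite E.
  have c0 : 0 < (p.+1 - i)%:R * (k - p.+1)%:R :> R.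
    by apply: mulr_gt0; rewrite ltr0n; lia.
  have d0 := hd p ltac:(lia).
  split.
    apply: le_trans hk; exact: mulr_ge0 (ltW c0) d0.
  split.
    move=> e0; apply/(hd' p ltac:(lia)).
    apply/eqP; rewrite eq_le d0 andbT.
    by rewrite -(pmulr_rle0 _ c0) -e0.
  move=> hs.
  have hz : forall l, (l <= n.-1)%N -> 0 <= (fun m => - a m) l - 2 * (fun m => - a m) l.+1 + (fun m => - a m) l.+2.
    move=> l hl /=; have := (hd' l hl).2 hs; lra.
  have hk' := @key _ (fun m => - a m) n.-1 hz p i k ltac:(lia) jk kN.
  have dz := (hd' p ltac:(lia)).2 hs.
  move: hk hk'; rewrite dz mulr0 /=.
  rewrite !mulrN => h1 h2.
  have d' : (- a p - - (2 * a p.+1) - a p.+2) = 0 by lra.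
  rewrite d' mulr0 in h2; lra.
Qed.
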